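(* Let $\tau$ be a primitive, aperiodic substitution and let $g_1,g_2$ be generators for $\tau$. Then $g_1^*\sim_o g_2^*$ if and only if $g_1\sim_G g_2$.
   Context: Let $\mathcal{A}$ be a finite nonempty alphabet, $\mathcal{A}^*$ the finite words over $\mathcal{A}$ (including the empty word), $\mathcal{A}^+$ the nonempty words, $|u|$ the length of $u$. A word $u$ is a factor of $v$ if $v=w_1uw_2$ for some words $w_1,w_2$. A substitution is a map $\tau:\mathcal{A}\to\mathcal{A}^+$ extended to a concatenation-respecting map on words and letterwise to sequences. For $x\in\mathcal{A}^{\mathbb{Z}}$, $x_{[i]}$ denotes the letter at index $i$ and $x_{[i,j]}$ the word $x_{[i]}\cdots x_{[j]}$. The language $\mathcal{L}(\tau)$ is the set of words that are factors of $\tau^n(a)$ for some letter $a$ and some $n\ge1$; $X_\tau=\{x\in\mathcal{A}^{\mathbb{Z}}: x_{[i,j]}\in\mathcal{L}(\tau)\ \forall i\le j\}$. $\tau$ is primitive if there is $n\ge1$ such that every letter $b$ is a factor of $\tau^n(a)$ for every letter $a$, and there is a letter $a$ such that for every $N$ there is $n$ with $|\tau^n(a)|>N$; a primitive $\tau$ is aperiodic if $X_\tau$ is infinite. A generator for $\tau$ is a triple $(v,u,w)$ with $v,u,w\in\mathcal{A}^+$, $u\in\mathcal{L}(\tau)$ and $\tau(u)=vuw$; $v$, $u$, $w$ are its left wing, center and right wing, and its length is $|u|$. Its completion $(v,u,w)^*\in X_\tau$ is the two-sided sequence $\cdots\tau^2(v)\tau(v)vu.w\tau(w)\tau^2(w)\cdots$,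 i.e. the left-infinite word $\cdots\tau^2(v)\tau(v)vu$ occupies the negative indices, ending at index $-1$, and the right-infinite word $w\tau(w)\tau^2(w)\cdots$ occupies the indices $\ge0$, starting at index $0$. If $(v,u,cw)$ is a generator with $c\in\mathcal{A}$, $w\in\mathcal{A}^*$, its right extension is the generator $(v,uc,w\tau(c))$; if $(vc,u,w)$ is a generator with $c\in\mathcal{A}$, $v\in\mathcal{A}^*$, its left extension is the generator $(\tau(c)v,cu,w)$. Two generators $g_1,g_2$ are G related ($g_1\sim_G g_2$) if there is a generator $g_3$ obtainable from $g_1$ and also from $g_2$ by finite (possibly empty) sequences of left and right extensions. For $x,y\in X_\tau$, $x\sim_o y$ (orbit equivalence) means there is $m\in\mathbb{Z}$ with $x_{[i]}=y_{[i+m]}$ for all $i\in\mathbb{Z}$. *)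

(* Defs.v *)
From mathcomp Require Import all_boot all_order all_algebra.
Set Implicit Arguments. Unset Strict Implicit. Unset Printing Implicit Defensive.
Import Order.TTheory GRing.Theory Num.Theory.
Local Open Scope ring_scope.

Section Subst.
Variable A : finType.

Definition substitution (tau : A -> seq A) : Prop := forall a, tau a != [::].

Definition subst (tau : A -> seq A) (s : seq A) : seq A := flatten (map tau s).

Definition substn (tau : A -> seq A) (n : nat) (s : seq A) : seq A :=
  iter n (subst tau) s.

Definition in_lang (tau : A -> seq A) (u : seq A) : Prop :=
  exists (a : A) (n : nat), (1 <= n)%N /\ infix u (substn tau n [:: a]).

Definition window (x : int -> A) (i j : int) : seq A :=
  [seq x (i + (k%:Z)) | k <- iota 0 (`|j - i|%N).+1].

Definition in_shift (tau : A -> seq A) (x : int -> A) : Prop :=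
  forall i j : int, i <= j -> in_lang tau (window x i j).

Definition primitive (tau : A -> seq A) : Prop :=
  (exists n : nat, (1 <= n)%N /\ forall a b : A, b \in substn tau n [:: a]) /\
  (exists a : A, forall N : nat, exists n : nat, (N < size (substn tau n [:: a]))%N).

Definition shift_infinite (tau : A -> seq A) : Prop :=
  ~ exists (n : nat) (f : 'I_n -> int -> A),
      forall x, in_shift tau x -> exists i : 'I_n, forall k, x k = f i k.

Definition aperiodic (tau : A -> seq A) : Prop :=
  primitive tau /\ shift_infinite tau.

Record triple := Triple { lwing : seq A; center : seq A; rwing : seq A }.

Definition generator (tau : A -> seq A) (g : triple) : Prop :=
  lwing g != [::] /\ center g != [::] /\ rwing g != [::] /\
  in_lang tau (center g) /\
  subst tau (center g) = lwing g ++ center g ++ rwing g.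

(* right-infinite word w tau(w) tau^2(w) ...: its prefix up to block n *)
Definition right_part (tau : A -> seq A) (w : seq A) (n : nat) : seq A :=
  flatten [seq substn tau k w | k <- iota 0 n.+1].

(* finite suffix tau^(n-1)(v) ... tau(v) v u of the left-infinite word *)
Definition left_part (tau : A -> seq A) (v u : seq A) (n : nat) : seq A :=
  flatten [seq substn tau k v | k <- rev (iota 0 n)] ++ u.

(* The completion (v,u,w)^* : left-infinite part ...tau(v) v u on indices < 0
   (ending at -1), right-infinite part w tau(w) ... on indices >= 0.
   [a0] is only a default letter for [nth]; it is never reached when
   v, w are nonempty. *)
Definition completion (tau : A -> seq A) (a0 : A) (g : triple) : int -> A :=
  fun i =>
    if 0 <= i then nth a0 (right_part tau (rwing g) `|i|%N) `|i|%N
    else nth a0 (rev (left_part tau (lwing g) (center g) `|i|%N)) (`|i|%N).-1.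

Definition ext_step (tau : A -> seq A) (g g' : triple) : Prop :=
  (exists (v u w : seq A) (c : A),
     g = Triple v u (c :: w) /\ g' = Triple v (rcons u c) (w ++ tau c)) \/
  (exists (v u w : seq A) (c : A),
     g = Triple (rcons v c) u w /\ g' = Triple (tau c ++ v) (c :: u) w).

Inductive ext_reach (tau : A -> seq A) : triple -> triple -> Prop :=
  | ext_refl g : ext_reach tau g g
  | ext_next g g' g'' : ext_step tau g g' -> ext_reach tau g' g'' ->
                        ext_reach tau g g''.

Definition G_related (tau : A -> seq A) (g1 g2 : triple) : Prop :=
  exists g3, generator tau g3 /\ ext_reach tau g1 g3 /\ ext_reach tau g2 g3.

Definition orbit_equiv (x y : int -> A) : Prop :=
  exists m : int, forall i : int, x i = y (i + m).

End Subst.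

(* Main.v *)
Require Import Defs.
From mathcomp Require Import all_boot all_order all_algebra.
From mathcomp Require Import zify.
Import Order.TTheory GRing.Theory Num.Theory.
Set Implicit Arguments. Unset Strict Implicit. Unset Printing Implicit Defensive.

Section S5.
Variable A : finType.
Variable tau : A -> seq A.

Lemma per_nat (y : int -> A) (d : nat) :
  (forall i, y i = y (i + d%:Z)%R) -> forall z (m : nat), y (z + (m * d)%N%:Z)%R = y z.
Proof.
move=> Hy z; elim=> [|m IH]; first by rewrite mul0n addr0.
by rewrite mulSnr PoszD addrA -Hy IH.
Qed.

Lemma per_int (y : int -> A) (d : nat) :
  (forall i, y i = y (i + d%:Z)%R) -> forall z (q : int), y (z + q * d%:Z)%R = y z.
Proof.
move=> Hy z [m|m]; first by rewrite -PoszM per_nat.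
set z' := (z + Negz m * d%:Z)%R.
have -> : z = (z' + (m.+1 * d)%N%:Z)%R.
  by rewrite /z' NegzE PoszM mulNr addrNK.
by rewrite per_nat.
Qed.

Lemma finite_of_periodic (d : nat) : (0 < d)%N ->
  (forall y, in_shift tau y -> forall i, y i = y (i + d%:Z)%R) -> ~ shift_infinite tau.
Proof.
case: d => // d _ Hper Hinf; apply: Hinf.
pose T := {ffun 'I_d.+1 -> A}.
exists #|T|, (fun (i : 'I_#|T|) (k : int) =>
   (enum_val i : T) (inord `|(k %% d.+1%:Z)%Z|%N)).
move=> y Hy; pose F : T := [ffun j : 'I_d.+1 => y (Posz j)].
exists (enum_rank F) => k; rewrite enum_rankK ffunE.
have H0 : (0 <= (k %% d.+1%:Z)%Z)%R by apply: modz_ge0.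
have H1 : ((k %% d.+1%:Z)%Z < d.+1%:Z)%R by apply: ltz_pmod.
rewrite inordK; last first.
  by rewrite -ltz_nat gez0_abs.
rewrite gez0_abs //.
rewrite {1}(divz_eq k d.+1%:Z) addrC.
by rewrite (per_int (Hper y Hy)).
Qed.

End S5.

Section S.
Variable A : finType.
Variable a0 : A.
Variable tau : A -> seq A.
Hypothesis Htau : substitution tau.

Notation sub := (subst tau).
Notation subN := (substn tau).

Lemma subst_cat s t : sub (s ++ t) = sub s ++ sub t.
Proof. by rewrite /subst map_cat flatten_cat. Qed.

Lemma subst_cons c s : sub (c :: s) = tau c ++ sub s.
Proof. by []. Qed.

Lemma subst_nil : sub [::] = [::].
Proof. by []. Qed.

Lemma subst1 c : sub [:: c] = tau c.
Proof. by rewrite subst_cons cats0. Qed.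

Lemma substn_cat n s t : subN n (s ++ t) = subN n s ++ subN n t.
Proof. elim: n => //= n IH; by rewrite IH subst_cat. Qed.

Lemma substn_cons n c s : subN n (c :: s) = subN n [:: c] ++ subN n s.
Proof. by rewrite -substn_cat. Qed.

Lemma substnS n s : subN n.+1 s = subN n (sub s).
Proof. rewrite /substn -addn1 iterD //. Qed.

Lemma substnSr n s : subN n.+1 s = sub (subN n s).
Proof. by []. Qed.

Lemma substn_tau n c : subN n (tau c) = subN n.+1 [:: c].
Proof. by rewrite substnS subst1. Qed.

Lemma substnD m n s : subN (m + n) s = subN m (subN n s).
Proof. by rewrite /substn iterD. Qed.

Lemma size_subst s : size s <= size (sub s).
Proof.
elim: s => //= c s IH; rewrite subst_cons size_cat.
have := Htau c; case: (tau c) => //= b l _; rewrite addSn ltnS; exact: leq_trans IH (leq_addl _ _).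
Qed.

Lemma size_substn n s : size s <= size (subN n s).
Proof. elim: n => //= n IH; exact: leq_trans IH (size_subst _). Qed.

Lemma infix_subst s t : infix s t -> infix (sub s) (sub t).
Proof.
move/infixP=> [p [q ->]]; apply/infixP; exists (sub p), (sub q).
by rewrite !subst_cat.
Qed.

Lemma infix_substn n s t : infix s t -> infix (subN n s) (subN n t).
Proof. elim: n => //= n IH H; exact: infix_subst (IH H). Qed.

Lemma in_lang_infix u t : in_lang tau t -> infix u t -> in_lang tau u.
Proof.
move=> [a [n [Hn Ht]]] Hu; exists a, n; split => //; exact: infix_trans Hu Ht.
Qed.

Lemma in_lang_subst u : in_lang tau u -> in_lang tau (sub u).
Proof.
move=> [a [n [Hn Ht]]]; exists a, n.+1; split => //.
rewrite substnSr; exact: infix_subst.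
Qed.

Lemma rp0 w : right_part tau w 0 = w.
Proof. by rewrite /right_part /= cats0. Qed.

Lemma rpS w n : right_part tau w n.+1 = right_part tau w n ++ subN n.+1 w.
Proof.
by rewrite /right_part -addn1 iotaD map_cat flatten_cat /= cats0 ?addn1.
Qed.

Lemma rp_sub w n : right_part tau w n.+1 = w ++ sub (right_part tau w n).
Proof.
elim: n => [|n IH]; first by rewrite rpS !rp0; reflexivity.
rewrite rpS {1}IH -catA; congr (_ ++ _); rewrite [in RHS]rpS subst_cat; reflexivity.
Qed.

Lemma size_rp w n : w != [::] -> n < size (right_part tau w n).
Proof.
move=> Hw; elim: n => [|n IH]; first by rewrite rp0 lt0n size_eq0.
rewrite rpS size_cat -addn1 leq_add //.
by apply: leq_trans (size_substn _ _); rewrite lt0n size_eq0.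
Qed.

Lemma lpS v u n : left_part tau v u n.+1 = subN n v ++ left_part tau v u n.
Proof.
by rewrite /left_part -addn1 iotaD rev_cat /= ?add0n ?addn1 ?catA.
Qed.

Lemma lp0 v u : left_part tau v u 0 = u.
Proof. by []. Qed.

Lemma size_lp v u n : v != [::] -> n <= size (left_part tau v u n).
Proof.
move=> Hv; elim: n => [|n IH] //; rewrite lpS size_cat -addn1 addnC leq_add //.
by apply: leq_trans (size_substn _ _); rewrite lt0n size_eq0.
Qed.


Lemma prefix_mono (P : nat -> seq A) :
  (forall n, exists s, P n.+1 = P n ++ s) ->
  forall n m, n <= m -> exists s, P m = P n ++ s.
Proof.
move=> HP n m /subnK <-; elim: (m - n) => [|k [s IH]]; first by exists [::]; rewrite cats0.
have [s' ->] := HP (k + n); exists (s ++ s'); by rewrite IH catA.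
Qed.

Lemma stab (P : nat -> seq A) :
  (forall n, exists s, P n.+1 = P n ++ s) ->
  forall n m t, t < size (P n) -> t < size (P m) -> nth a0 (P n) t = nth a0 (P m) t.
Proof.
move=> HP n m t Hn Hm; case: (leqP n m) => H.
  have [s ->] := prefix_mono HP H; by rewrite nth_cat Hn.
have [s ->] := prefix_mono HP (ltnW H); by rewrite nth_cat Hm.
Qed.

Definition Rw w t := nth a0 (right_part tau w t) t.
Definition Lw v u t := nth a0 (rev (left_part tau v u t.+1)) t.

Lemma Rw_rp w n t : w != [::] -> t < size (right_part tau w n) ->
  nth a0 (right_part tau w n) t = Rw w t.
Proof.
move=> Hw Ht; apply: (stab (P := right_part tau w)) => //; last exact: size_rp.
by move=> k; exists (subN k.+1 w); rewrite rpS.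
Qed.

Lemma Lw_lp v u n t : v != [::] -> t < size (left_part tau v u n) ->
  nth a0 (rev (left_part tau v u n)) t = Lw v u t.
Proof.
move=> Hv Ht; rewrite /Lw; apply: (stab (P := fun k => rev (left_part tau v u k))).
- by move=> k; exists (rev (subN k v)); rewrite lpS rev_cat.
- by rewrite size_rev.
- by rewrite size_rev; exact: size_lp.
Qed.

Lemma comp_pos g n : completion tau a0 g (Posz n) = Rw (rwing g) n.
Proof. by []. Qed.

Lemma comp_neg g n : completion tau a0 g (Negz n) = Lw (lwing g) (center g) n.
Proof. by []. Qed.


Lemma rp_cons c w n :
  right_part tau (c :: w) n.+1 = c :: right_part tau (w ++ tau c) n ++ subN n.+1 w.
Proof.
elim: n => [|n IH].
  by rewrite rpS !rp0 /= subst_cons -catA.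
rewrite rpS IH rpS substn_cons (substn_cat n.+1) substn_tau /= -!catA; reflexivity.
Qed.

Lemma lp_rcons v c u n :
  left_part tau (rcons v c) u n.+1 = subN n v ++ left_part tau (tau c ++ v) (c :: u) n.
Proof.
elim: n => [|n IH].
  by rewrite lpS !lp0 /= cat_rcons.
rewrite lpS IH lpS -cats1 !substn_cat substn_tau -!catA; reflexivity.
Qed.

Lemma lp_rcons_u v u c n : left_part tau v (rcons u c) n = rcons (left_part tau v u n) c.
Proof. by rewrite /left_part rcons_cat. Qed.

Import GRing.Theory.
Local Open Scope ring_scope.

Lemma int_S n : Posz n + 1 = Posz n.+1.
Proof. by rewrite -addn1 PoszD. Qed.
Lemma int_N0 : Negz 0 + 1 = 0.
Proof. by []. Qed.
Lemma int_NS n : Negz n.+1 + 1 = Negz n.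
Proof. by rewrite !NegzE -addn1 PoszD opprD addrK. Qed.

Lemma comp_right v u c w i : v != [::] ->
  completion tau a0 (Triple v (rcons u c) (w ++ tau c)) i =
  completion tau a0 (Triple v u (c :: w)) (i + 1).
Proof.
move=> Hv; case: i => n.
  rewrite int_S !comp_pos /= /Rw rp_cons /=.
  have Hw : w ++ tau c != [::] by rewrite -size_eq0 size_cat addn_eq0 !size_eq0 (negbTE (Htau c)) andbF.
  by rewrite nth_cat size_rp.
case: n => [|n].
  rewrite int_N0 comp_neg (comp_pos _ 0) /= /Lw /Rw rp0 lp_rcons_u rev_rcons; by [].
rewrite int_NS !comp_neg /= /Lw lp_rcons_u rev_rcons /=.
apply: Lw_lp => //; apply: (@leq_trans n.+2) => //; exact: size_lp.
Qed.

Lemma comp_left v c u w i : 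
  completion tau a0 (Triple (tau c ++ v) (c :: u) w) i =
  completion tau a0 (Triple (rcons v c) u w) i.
Proof.
case: i => n; first by rewrite !comp_pos.
rewrite !comp_neg /=.
have Hv : tau c ++ v != [::] by have := Htau c; case: (tau c).
have H1 : rcons v c != [::] by rewrite -size_eq0 size_rcons.
have H2 : (n < size (left_part tau (rcons v c) u n.+2))%N by apply: (@leq_trans n.+2) => //; exact: size_lp.
rewrite -(Lw_lp H1 H2).
rewrite lp_rcons rev_cat nth_cat size_rev.
have -> : (n < size (left_part tau (tau c ++ v) (c :: u) n.+1))%N by apply: size_lp.
by [].
Qed.


Local Close Scope ring_scope.

Lemma nth_cat_shift (s t : seq A) k : nth a0 (s ++ t) (size s + k) = nth a0 t k.
Proof. by rewrite nth_cat ltnNge leq_addr /= addKn. Qed.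

Lemma sub_prefix_nth (P1 P2 : seq A) k t :
  k <= size P1 -> k <= size P2 -> (forall j, j < k -> nth a0 P1 j = nth a0 P2 j) ->
  t < k -> nth a0 (sub P1) t = nth a0 (sub P2) t.
Proof.
move=> H1 H2 Hj Ht.
have Htk : take k P1 = take k P2.
  apply: (@eq_from_nth _ a0); first by rewrite !size_takel.
  move=> j; rewrite size_takel // => Hjk; rewrite !nth_take //; exact: Hj.
rewrite -(cat_take_drop k P1) -(cat_take_drop k P2) !subst_cat Htk.
have Hs : t < size (sub (take k P2)).
  apply: leq_trans Ht _; apply: leq_trans (size_subst _); by rewrite size_takel.
by rewrite !nth_cat Hs.
Qed.

Lemma shift_eq w1 w2 t : w1 != [::] -> w2 != [::] ->
  (forall j, Rw w1 j = Rw w2 j) ->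
  Rw w1 (size w1 + t) = Rw w2 (size w2 + t).
Proof.
move=> Hw1 Hw2 Heq; set n := t + size w1 + size w2.
have E : forall w, w != [::] -> size w <= size w1 + size w2 -> Rw w (size w + t) = nth a0 (sub (right_part tau w n)) t.
  move=> w Hw Hn; rewrite -(Rw_rp (n := n.+1) Hw); last first.
    apply: leq_trans (size_rp _ Hw); move: Hn; rewrite /n; lia.
  by rewrite rp_sub nth_cat_shift.
rewrite E // ?E //; try lia.
apply: (@sub_prefix_nth _ _ n.+1); try exact: size_rp; last by rewrite /n; lia.
move=> j Hj; rewrite (Rw_rp Hw1) ?(Rw_rp Hw2) ?Heq //; exact: leq_trans Hj (size_rp _ _).
Qed.


Lemma occ w1 u' : primitive tau -> w1 != [::] -> in_lang tau u' ->
  exists j, size w1 <= j /\ forall k, k < size u' -> nth a0 u' k = Rw w1 (j + k).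
Proof.
move=> [[N [HN Hall]] _] Hw1 [a [n [Hn Hinf]]].
case Ew: w1 Hw1 => [//|b0 w1'] _; rewrite -Ew.
have H1 : infix u' (subN (n + N) w1).
  apply: (infix_trans Hinf); rewrite substnD; apply: infix_substn.
  apply: (@infix_trans _ (subN N [:: b0])); first by rewrite infix1s.
  by apply: infix_substn; rewrite Ew infix1s mem_head.
case: n Hn H1 {Hinf} => // n _; rewrite addSn => /infixP [p [q Hpq]].
have Hsz : size w1 <= size (right_part tau w1 (n + N)).
  have [s' ->] := prefix_mono (P := right_part tau w1) (fun k => ex_intro _ _ (rpS w1 k)) (leq0n (n + N)).
  by rewrite rp0 size_cat leq_addr.
exists (size (right_part tau w1 (n + N) ++ p)); split.
  by rewrite size_cat (leq_trans Hsz) // leq_addr.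
move=> k Hk; have Hw1 : w1 != [::] by rewrite Ew.
rewrite -(Rw_rp (n := (n + N).+1) Hw1).
  by rewrite rpS Hpq (catA (right_part tau w1 (n + N)) p) nth_cat_shift nth_cat Hk.
rewrite rpS Hpq !size_cat; lia.
Qed.

Lemma occ_window w1 (y : int -> A) i d : primitive tau -> w1 != [::] -> in_shift tau y ->
  exists j, size w1 <= j /\ y i = Rw w1 j /\ y (i + d%:Z)%R = Rw w1 (j + d).
Proof.
move=> Hp Hw1 Hy.
have Hle : (i <= i + d%:Z)%R by rewrite lerDl.
have [j [Hj Hk]] := occ Hp Hw1 (Hy _ _ Hle).
have Ed : `|(i + d%:Z - i)%R|%N = d by rewrite addrC addKr.
have Hsz : size (window y i (i + d%:Z)%R) = d.+1 by rewrite /window size_map size_iota Ed.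
exists j; split => //; split.
  have := Hk 0; rewrite Hsz addn0 => <- //.
  rewrite /window (nth_map 0%N) ?size_iota ?Ed // nth_iota //=; by rewrite addr0.
have := Hk d; rewrite Hsz => <- //.
rewrite /window (nth_map 0%N) ?size_iota ?Ed // nth_iota //=.
Qed.


Lemma no_two_wings w1 w2 : primitive tau -> shift_infinite tau -> w1 != [::] ->
  size w1 < size w2 -> (forall j, Rw w1 j = Rw w2 j) -> False.
Proof.
move=> Hp Hinf Hw1 Hlt Heq.
have Hw2 : w2 != [::] by rewrite -size_eq0 -lt0n (leq_trans _ Hlt).
set d := size w2 - size w1.
have Hper : forall i, size w1 <= i -> Rw w1 i = Rw w1 (i + d).
  move=> i /subnK <-; set t := i - size w1.
  have -> : t + size w1 + d = size w2 + t by rewrite /d; lia.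
  by rewrite [t + _]addnC (shift_eq t Hw1 Hw2 Heq) Heq.
apply: (finite_of_periodic (d := d)) => //; first by rewrite /d subn_gt0.
move=> y Hy i; have [j [Hj [-> ->]]] := occ_window i d Hp Hw1 Hy.
exact: Hper.
exact: Hinf.
Qed.


Lemma Rw_small w t : w != [::] -> t < size w -> Rw w t = nth a0 w t.
Proof. move=> Hw Ht; by rewrite -(Rw_rp (n := 0) Hw) rp0. Qed.

Lemma Lw_small v u t : v != [::] -> t < size u -> Lw v u t = nth a0 (rev u) t.
Proof. move=> Hv Ht; by rewrite -(Lw_lp (n := 0) Hv) lp0. Qed.

Lemma gen_eq g1 g2 : primitive tau -> shift_infinite tau ->
  generator tau g1 -> generator tau g2 ->
  (forall i, completion tau a0 g1 i = completion tau a0 g2 i) ->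
  size (center g1) = size (center g2) -> g1 = g2.
Proof.
case: g1 => v1 u1 w1; case: g2 => v2 u2 w2 /= Hp Hinf.
move=> [Hv1 [Hu1 [Hw1 [_ Hs1]]]] [Hv2 [Hu2 [Hw2 [_ Hs2]]]] Hc Hsu /=.
simpl in Hs1, Hs2, Hv1, Hv2, Hw1, Hw2, Hsu.
have HR : forall j, Rw w1 j = Rw w2 j by move=> j; have := Hc (Posz j); rewrite !comp_pos.
have HL : forall j, Lw v1 u1 j = Lw v2 u2 j by move=> j; have := Hc (Negz j); rewrite !comp_neg.
have Hsw : size w1 = size w2.
  case: (ltngtP (size w1) (size w2)) => // H.
    by case: (no_two_wings Hp Hinf Hw1 H HR).
  by case: (no_two_wings Hp Hinf Hw2 H (fun j => esym (HR j))).
have Ew : w1 = w2.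
  apply: (@eq_from_nth _ a0) => // t Ht.
  by rewrite -Rw_small // HR Rw_small // -Hsw.
have Eu : u1 = u2.
  rewrite -(revK u1) -(revK u2); congr rev.
  apply: (@eq_from_nth _ a0); first by rewrite !size_rev.
  move=> t; rewrite size_rev => Ht.
  by rewrite -(Lw_small Hv1 Ht) HL Lw_small // -Hsu.
subst w2 u2.
have Hsv : size v1 = size v2.
  have := congr1 size (etrans (esym Hs1) Hs2); rewrite !size_cat; lia.
have := etrans (esym Hs1) Hs2; move/eqP; rewrite eqseq_cat // => /andP [/eqP -> _].
by [].
Qed.


Lemma gen_right v u c w : generator tau (Triple v u (c :: w)) ->
  generator tau (Triple v (rcons u c) (w ++ tau c)).
Proof.
move=> [Hv [Hu [Hw [Hl Hs]]]]; simpl in *.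
have Hs' : sub (rcons u c) = v ++ rcons u c ++ (w ++ tau c).
  by rewrite -cats1 subst_cat Hs subst1 -!catA.
split => //; split; first by rewrite -size_eq0 size_rcons.
split; first by rewrite -size_eq0 size_cat addn_eq0 !size_eq0 (negbTE (Htau c)) andbF.
split => //; apply: (in_lang_infix (in_lang_subst Hl)).
rewrite Hs; apply/infixP; exists v, w; by rewrite -cats1 -!catA.
Qed.

Lemma gen_left v c u w : generator tau (Triple (rcons v c) u w) ->
  generator tau (Triple (tau c ++ v) (c :: u) w).
Proof.
move=> [Hv [Hu [Hw [Hl Hs]]]]; simpl in *.
split; first by rewrite -size_eq0 size_cat addn_eq0 !size_eq0 (negbTE (Htau c)).
split => //; split => //; split.
  apply: (in_lang_infix (in_lang_subst Hl)).
  rewrite Hs; apply/infixP; exists v, w; by rewrite -cats1 -!catA.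
by rewrite subst_cons Hs -cats1 -!catA.
Qed.

Lemma reach_trans g1 g2 g3 : ext_reach tau g1 g2 -> ext_reach tau g2 g3 -> ext_reach tau g1 g3.
Proof.
elim=> // g g' g'' Hs _ IH H; exact: ext_next Hs (IH H).
Qed.

Lemma reach_snoc g1 g2 g3 : ext_reach tau g1 g2 -> ext_step tau g2 g3 -> ext_reach tau g1 g3.
Proof. move=> H1 H2; apply: reach_trans H1 (ext_next H2 (ext_refl _ _)). Qed.

Local Open Scope ring_scope.

Lemma reach_shift g g' : ext_reach tau g g' -> lwing g != [::] -> rwing g != [::] ->
  exists r : nat, (forall i, completion tau a0 g' i = completion tau a0 g (i + r%:Z)) /\
    lwing g' != [::] /\ rwing g' != [::].
Proof.
elim=> [g0|g0 g1 g2 Hs _ IH] Hv Hw.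
  by exists 0%N; split => // i; rewrite addr0.
case: Hs => [[v [u [w [c [E1 E2]]]]]|[v [u [w [c [E1 E2]]]]]]; subst g0 g1; simpl in *.
- have Hw' : w ++ tau c != [::] by rewrite -size_eq0 size_cat addn_eq0 !size_eq0 (negbTE (Htau c)) andbF.
  have [r [Hr [Hv2 Hw2]]] := IH Hv Hw'.
  exists r.+1; split => // i; rewrite Hr comp_right //.
  by rewrite -addrA int_S.
- have Hv' : tau c ++ v != [::] by rewrite -size_eq0 size_cat addn_eq0 !size_eq0 (negbTE (Htau c)).
  have [r [Hr [Hv2 Hw2]]] := IH Hv' Hw.
  by exists r; split => // i; rewrite Hr comp_left.
Qed.

Local Close Scope ring_scope.

Lemma right_iter g r : generator tau g -> exists g', ext_reach tau g g' /\ generator tau g' /\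
  size (center g') = size (center g) + r /\
  forall i, completion tau a0 g' i = completion tau a0 g (i + r%:Z)%R.
Proof.
move=> Hg; elim: r => [|r [g' [Hr [Hg' [Hs Hc]]]]].
  exists g; split; first exact: ext_refl.
  by split => //; split; [rewrite addn0 | move=> i; rewrite addr0].
case: g' Hr Hg' Hs Hc => v u [|c w] Hr Hg' Hs Hc; first by case: Hg' => _ [_ []].
exists (Triple v (rcons u c) (w ++ tau c)); split.
  apply: reach_snoc Hr _; left; by exists v, u, w, c.
split; first exact: gen_right.
split; first by rewrite /= size_rcons addnS -Hs.
move=> i; rewrite comp_right; last by case: Hg'.
by rewrite Hc -addrA [(1 + _)%R]addrC int_S.
Qed.

Lemma left_iter g l : generator tau g -> exists g', ext_reach tau g g' /\ generator tau g' /\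
  size (center g') = size (center g) + l /\
  forall i, completion tau a0 g' i = completion tau a0 g i.
Proof.
move=> Hg; elim: l => [|l [g' [Hr [Hg' [Hs Hc]]]]].
  exists g; split; first exact: ext_refl.
  by split => //; split; [rewrite addn0 | move=> i].
case: g' Hr Hg' Hs Hc => v u w Hr Hg' Hs Hc.
case/lastP E: v Hr Hg' Hs Hc => [|v' c] Hr Hg' Hs Hc; first by case: Hg'.
exists (Triple (tau c ++ v') (c :: u) w); split.
  apply: reach_snoc Hr _; right; by exists v', u, w, c.
split; first exact: gen_left.
split; first by rewrite /= addnS -Hs.
by move=> i; rewrite comp_left Hc.
Qed.


Lemma conv g1 g2 (r1 r2 : nat) : primitive tau -> shift_infinite tau ->
  generator tau g1 -> generator tau g2 ->
  (forall i, completion tau a0 g1 (i + r1%:Z)%R = completion tau a0 g2 (i + r2%:Z)%R) ->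
  G_related tau g1 g2.
Proof.
move=> Hp Hinf Hg1 Hg2 H.
have [h1 [R1 [Hh1 [_ C1]]]] := right_iter r1 Hg1.
have [h2 [R2 [Hh2 [_ C2]]]] := right_iter r2 Hg2.
set s1 := size (center h1); set s2 := size (center h2).
have [k1 [Q1 [Hk1 [S1 D1]]]] := left_iter (maxn s1 s2 - s1) Hh1.
have [k2 [Q2 [Hk2 [S2 D2]]]] := left_iter (maxn s1 s2 - s2) Hh2.
have E : k1 = k2.
  apply: gen_eq => //.
    by move=> i; rewrite D1 D2 C1 C2 H.
  rewrite S1 S2 -/s1 -/s2 !subnKC //; [exact: leq_maxr | exact: leq_maxl].
exists k1; split => //; split; first exact: reach_trans R1 Q1.
by rewrite E; exact: reach_trans R2 Q2.
Qed.

Lemma main_aux g1 g2 : primitive tau -> aperiodic tau ->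
  generator tau g1 -> generator tau g2 ->
  orbit_equiv (completion tau a0 g1) (completion tau a0 g2) <-> G_related tau g1 g2.
Proof.
move=> Hp [_ Hinf] Hg1 Hg2; split.
  move=> [[k|k] Hm].
    apply: (conv (r1 := 0) (r2 := k)) => // i; by rewrite addr0 Hm.
  apply: (conv (r1 := k.+1) (r2 := 0)) => // i; rewrite addr0 Hm NegzE.
  by rewrite addrK.
move=> [g3 [Hg3 [R1 R2]]].
have [Hv1 [_ [Hw1 _]]] := Hg1; have [Hv2 [_ [Hw2 _]]] := Hg2.
have [r1 [H1 _]] := reach_shift R1 Hv1 Hw1.
have [r2 [H2 _]] := reach_shift R2 Hv2 Hw2.
exists (r2%:Z - r1%:Z)%R => i.
have := H1 (i - r1%:Z)%R; rewrite H2 subrK => <-.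
by rewrite addrA addrAC.
Qed.

End S.

Theorem mainTheorem5 (A : finType) (a0 : A) (tau : A -> seq A)
  (Htau : substitution tau) (Hprim : primitive tau) (Hap : aperiodic tau)
  (g1 g2 : triple A) (Hg1 : generator tau g1) (Hg2 : generator tau g2) :
  orbit_equiv (completion tau a0 g1) (completion tau a0 g2) <->
  G_related tau g1 g2.
Proof. exact: main_aux. Qed.
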